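(* Let $A\in\mathbb{C}^{n\times n}$, and fix $A^-\in A\{1\}$ and $A^{GD}\in A\{GD\}$. For $X\in\mathbb{C}^{n\times n}$ the following are equivalent: (i) $X = A^{-}AA^{GD}$; (ii) $XAX=X$, $R(X)=R(A^{-}A)$, and $N(X)=N(AA^{GD})$; (iii) $XAX=X$, $XA=A^{-}A$, and $AX=AA^{GD}$.
   Context: For $A\in\mathbb{C}^{n\times n}$, $ind(A)$ is the smallest nonnegative integer $k$ with $\mathrm{rank}(A^k)=\mathrm{rank}(A^{k+1})$. $A\{1\}$ is the set of matrices $X$ with $AXA=A$. With $k=ind(A)$, $A\{GD\}$ is the set of G-Drazin inverses of $A$: matrices $X$ with $AXA=A$, $XA^{k+1}=A^k$, $A^{k+1}X=A^k$. $R(\cdot)$, $N(\cdot)$ denote range and null space. *)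

(* Defs.v *)
From HB Require Import structures.
From mathcomp Require Import all_boot all_order all_algebra.
From mathcomp Require Import complex.
Set Implicit Arguments. Unset Strict Implicit. Unset Printing Implicit Defensive.
Import GRing.Theory Num.Theory.
Local Open Scope ring_scope.

Section Defs.
Variables (F : fieldType) (n : nat).

Definition ind_pred (A : 'M[F]_n) : pred nat :=
  fun k => \rank (A ^+ k) == \rank (A ^+ k.+1).

Lemma ind_ex (A : 'M[F]_n) : exists k, ind_pred A k.
Proof.
have dec : forall k, (\rank (A ^+ k.+1) <= \rank (A ^+ k))%N.
  by move=> k; rewrite exprSr mxrankM_maxl.
case: (boolP [exists k : 'I_n.+1, ind_pred A k]).
  by move/existsP=> [k Hk]; exists k.
move/existsPn=> H; exfalso.
have: forall k, (k <= n.+1)%N -> (\rank (A ^+ k) + k <= n)%N.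
  elim=> [|k IH] Hk; first by rewrite addn0 rank_leq_row.
  have := H (Ordinal Hk); rewrite /ind_pred /= => Hne.
  have Hlt : (\rank (A ^+ k.+1) < \rank (A ^+ k))%N.
    by rewrite ltn_neqAle eq_sym Hne dec.
  have := IH (ltnW Hk); rewrite addnS; apply: leq_trans; rewrite ltn_add2r.
  exact: Hlt.
by move/(_ n.+1 (leqnn _)); rewrite addnS ltnNge leq_addl.
Qed.

Definition ind (A : 'M[F]_n) : nat := ex_minn (ind_ex A).

Definition inner_inverse (A X : 'M[F]_n) : Prop := A *m X *m A = A.

Definition GD_inverse (A X : 'M[F]_n) : Prop :=
  [/\ A *m X *m A = A,
      X *m A ^+ (ind A).+1 = A ^+ (ind A) &
      A ^+ (ind A).+1 *m X = A ^+ (ind A)].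

Definition range (M : 'M[F]_n) : 'cV[F]_n -> Prop :=
  fun v => exists w : 'cV[F]_n, v = M *m w.
Definition nullsp (M : 'M[F]_n) : 'cV[F]_n -> Prop :=
  fun v => M *m v = 0.

Definition set_eq (P Q : 'cV[F]_n -> Prop) : Prop := forall v, P v <-> Q v.

End Defs.

(* Main.v *)
Require Import Defs.
From HB Require Import structures.
From mathcomp Require Import all_boot all_order all_algebra.
From mathcomp Require Import complex.
Import GRing.Theory Num.Theory.
Local Open Scope ring_scope.
Local Open Scope complex_scope.

Lemma mx_ext_cV (K : fieldType) (n : nat) (B C : 'M[K]_n) :
  (forall v : 'cV[K]_n, B *m v = C *m v) -> B = C.
Proof.
move=> H; apply/matrixP => i j.
have := f_equal (fun M : 'cV[K]_n => M i 0) (H (delta_mx j 0)).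
by rewrite -!colE !mxE.
Qed.

Theorem theorem3p7 (R : rcfType) (n : nat) (A Am AGD X : 'M[R[i]]_n) :
  inner_inverse A Am -> GD_inverse A AGD ->
  [/\ (X = Am *m A *m AGD) <->
        [/\ X *m A *m X = X,
            set_eq (range X) (range (Am *m A)) &
            set_eq (nullsp X) (nullsp (A *m AGD))],
      (X = Am *m A *m AGD) <->
        [/\ X *m A *m X = X, X *m A = Am *m A & A *m X = A *m AGD] &
      [/\ X *m A *m X = X,
            set_eq (range X) (range (Am *m A)) &
            set_eq (nullsp X) (nullsp (A *m AGD))] <->
        [/\ X *m A *m X = X, X *m A = Am *m A & A *m X = A *m AGD]].
Proof.
rewrite /inner_inverse /GD_inverse => HM [HG _ _].
have i3 : X = Am *m A *m AGD <->
    [/\ X *m A *m X = X, X *m A = Am *m A & A *m X = A *m AGD].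
  split.
    move=> ->.
    have e1 : Am *m A *m AGD *m A = Am *m A by rewrite -!mulmxA (mulmxA A) HG.
    have e2 : A *m (Am *m A *m AGD) = A *m AGD by rewrite !mulmxA HM.
    split => //.
    by rewrite e1 !mulmxA -(mulmxA Am A Am) -(mulmxA Am (A *m Am) A) HM.
  case=> h1 h2 h3; by rewrite -h1 h2 -mulmxA h3 mulmxA.
have i23 : [/\ X *m A *m X = X,
            set_eq (range X) (range (Am *m A)) &
            set_eq (nullsp X) (nullsp (A *m AGD))] <->
        [/\ X *m A *m X = X, X *m A = Am *m A & A *m X = A *m AGD].
  split.
    case=> h1 hR hN; split => //.
      have e : X *m A *m (Am *m A) = Am *m A.
        apply: mx_ext_cV => v.
        have [w hw] : range X (Am *m A *m v) by apply/hR; exists v.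
        by rewrite -(mulmxA (X *m A) (Am *m A) v) hw !mulmxA h1.
      by rewrite -[RHS]e !mulmxA -(mulmxA X A Am) -(mulmxA X (A *m Am) A) HM.
    have e : A *m AGD *m (1%:M - A *m X) = 0.
      apply: mx_ext_cV => v; rewrite mul0mx.
      have : nullsp X ((1%:M - A *m X) *m v).
        by rewrite /nullsp mulmxA mulmxBr mulmx1 mulmxA h1 subrr mul0mx.
      by move/hN; rewrite /nullsp mulmxA.
    move/eqP: e; rewrite mulmxBr mulmx1 subr_eq0 => /eqP ->.
    by rewrite !mulmxA HG.
  case=> h1 h2 h3; split => //.
    move=> v; split.
      by case=> w ->; exists (X *m w); rewrite -{1}h1 h2 mulmxA.
    by case=> w ->; exists (A *m w); rewrite -h2 mulmxA.
  move=> v; rewrite /nullsp; split.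
    by move=> h; rewrite -h3 -mulmxA h mulmx0.
  by move=> h; rewrite -h1 -(mulmxA X A X) h3 -(mulmxA X (A *m AGD) v) h mulmx0.
split; [split | exact: i3 | exact: i23].
  move=> hX. apply: (proj2 i23). exact: (proj1 i3).
move=> hX. apply: (proj2 i3). exact: (proj1 i23).
Qed.
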